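(* Let $\mathbf{x}$ be a random vector in $\mathbb{R}^d$ and let $\beta\in\mathbb{R}^d$ be a fixed vector. Let $\mathcal{S}_1,\dots,\mathcal{S}_m\subset\{1,\dots,d\}$ be non-empty, pairwise disjoint index sets with $d_i=|\mathcal{S}_i|$, and for each $i$ let $\mathbf{x}^{(i)}=[\mathbf{x}_r, r\in\mathcal{S}_i]\in\mathbb{R}^{d_i}$ and $\beta^{(i)}=[\beta_r, r\in\mathcal{S}_i]\in\mathbb{R}^{d_i}$. Assume $\mathbf{x}^{(i)}$ has probability density $p_i$ with respect to Lebesgue measure $\mu_i$ on $\mathbb{R}^{d_i}$. For each $i$, fix a number of levels $K_i$ and consider quantizers $Q_i:\mathbb{R}^{d_i}\to\{c^{(i)}_1,\dots,c^{(i)}_{K_i}\}$ of the form $Q_i(x^{(i)})=c^{(i)}_k$ if $x^{(i)}\in\mathcal{D}^{(i)}_k$, where $c^{(i)}_k\in\mathbb{R}^{d_i}$ and $\mathcal{D}^{(i)}_1,\dots,\mathcal{D}^{(i)}_{K_i}$ partition $\mathbb{R}^{d_i}$. Set $\hat{\mathbf y}=\langle \mathbf{x},\beta\rangle$, $\tilde{\mathbf{x}}^{(i)}=Q_i(\mathbf{x}^{(i)})$, and $\tilde{\mathbf y}=\sum_{i=1}^m\langle\tilde{\mathbf{x}}^{(i)},\beta^{(i)}\rangle$ (i.e. $\langle\tilde{\mathbf x},\beta\rangle$ where $\tilde{\mathbf x}$ is the vector obtained by replacing each block $\mathbf x^{(i)}$ by $\tilde{\mathbf x}^{(i)}$). Let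 $Q_1,\dots,Q_m$ be optimal quantizers for the problem $\min_{Q_1,\dots,Q_m}\mathbb{E}[(\tilde{\mathbf y}-\hat{\mathbf y})^2]$. Then simultaneously for every $i\in\{1,\dots,m\}$, $Q_i$ has the structure $$Q_i(x^{(i)})=\bar c^{(i)}_k\quad\text{if } x^{(i)}\in\bar{\mathcal{D}}^{(i)}_k,\ k\in\{1,\dots,K_i\},$$ where $\bar c^{(i)}_k$ and $\bar{\mathcal D}^{(i)}_k$ are minimizers of $$\min_{c^{(i)}_k,\mathcal{D}^{(i)}_k}\sum_{k=1}^{K_i}\int_{\mathcal{D}^{(i)}_k} f_i(c^{(i)}_k,x^{(i)})\,p_i(x^{(i)})\,d\mu_i(x^{(i)}),$$ with $$f_i(c,x^{(i)})=\mathbb{E}\Big[\Big(\langle c-x^{(i)},\beta^{(i)}\rangle+\sum_{i'\neq i}\langle\tilde{\mathbf{x}}^{(i')}-\mathbf{x}^{(i')},\beta^{(i')}\rangle\Big)^2\,\Big|\,\mathbf{x}^{(i)}=x^{(i)}\Big],$$ where for $i'\neq i$, $\tilde{\mathbf{x}}^{(i')}=Q_{i'}(\mathbf{x}^{(i')})$ is obtained from the optimal quantizer $Q_{i'}$.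
   Context: Expectations are over the distribution of $\mathbf{x}$ with $\beta$ held fixed. $\langle\cdot,\cdot\rangle$ denotes the Euclidean inner product. The minimization defining $\bar c^{(i)}_k,\bar{\mathcal D}^{(i)}_k$ is over codepoints $c^{(i)}_k\in\mathbb{R}^{d_i}$ and partitions $\{\mathcal D^{(i)}_k\}_{k=1}^{K_i}$ of $\mathbb{R}^{d_i}$, with the other quantizers $Q_{i'}$, $i'\neq i$, fixed at their optimal values. *)

(* Defs.v *)
From HB Require Import structures.
From mathcomp Require Import all_boot all_order all_algebra.
From mathcomp Require Import all_classical all_reals all_analysis.
From mathcomp Require Import measurable_realfun.
Set Implicit Arguments. Unset Strict Implicit. Unset Printing Implicit Defensive.
Import Order.TTheory GRing.Theory Num.Theory.
Import numFieldNormedType.Exports.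
Local Open Scope classical_set_scope.
Local Open Scope ring_scope.

Section Defs.
Variable R : realType.

(* vectors of R^n are represented as n.-tuple R (product Borel sigma-algebra) *)
Definition dot (n : nat) (u v : n.-tuple R) : R := \sum_(j < n) tnth u j * tnth v j.

Definition tsub (n : nat) (u v : n.-tuple R) : n.-tuple R :=
  [tuple tnth u j - tnth v j | j < n].

(* the block [v_r, r in A] (indices of A in increasing order) *)
Definition blk (d : nat) (A : {set 'I_d}) (v : d.-tuple R) : #|A|.-tuple R :=
  [tuple tnth v (enum_val j) | j < #|A|].

(* mu is the Lebesgue measure on R^n: it gives measurable boxes the product
   of the (one-dimensional) Lebesgue measures of their sides; this
   characterizes the n-dimensional Lebesgue measure on the Borel sets. *)
Definition is_lebesgue_tuple (n : nat)
    (mu : {measure set (n.-tuple R) -> \bar R}) : Prop :=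
  forall A : 'I_n -> set R, (forall j, measurable (A j)) ->
    mu [set x | forall j, A j (tnth x j)] = (\prod_(j < n) lebesgue_measure (A j))%E.

Record quantizer (K n : nat) := Quantizer {
  qc : 'I_K -> n.-tuple R ;
  qD : 'I_K -> set (n.-tuple R) }.

Definition valid_quantizer (K n : nat) (q : quantizer K n) : Prop :=
  (forall k, measurable (qD q k)) /\
  (forall k l, k != l -> qD q k `&` qD q l = set0) /\
  (forall x, exists k, qD q k x).

(* Q(x) = c_k if x in D_k *)
Definition quantize (K n : nat) (q : quantizer K n) (x : n.-tuple R) : n.-tuple R :=
  [tuple \sum_(k < K) \1_(qD q k) x * tnth (qc q k) j | j < n].

End Defs.

Section Prob.
Context {dT : measure_display} {T : measurableType dT} {R : realType}.
Variable P : probability T R.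

(* g is a (nonnegative, measurable) version of E[Z | X], i.e. u |-> E[Z | X = u] *)
Definition is_cond_exp {dU : measure_display} (U : measurableType dU) (X : T -> U)
    (Z : T -> \bar R) (g : U -> \bar R) : Prop :=
  measurable_fun [set: U] g /\ (forall u, (0 <= g u)%E) /\
  forall A, measurable A ->
    (\int[P]_(w in X @^-1` A) Z w = \int[P]_(w in X @^-1` A) g (X w))%E.

Variables (d m : nat) (x : T -> d.-tuple R) (beta : d.-tuple R)
  (S : 'I_m -> {set 'I_d}) (K : 'I_m -> nat).

Definition xb (i : 'I_m) (w : T) : #|S i|.-tuple R := blk (S i) (x w).

Definition yhat (w : T) : R := dot (x w) beta.

(* ytilde = <xtilde, beta>, xtilde = x with each block x^(i) replaced by Q_i(x^(i)) *)
Definition ytilde (Q : forall i, quantizer R (K i) #|S i|) (w : T) : R :=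
  \sum_(i < m) dot (quantize (Q i) (xb i w)) (blk (S i) beta) +
  \sum_(r < d | [forall i : 'I_m, r \notin S i]) tnth (x w) r * tnth beta r.

Definition joint_risk (Q : forall i, quantizer R (K i) #|S i|) : \bar R :=
  (\int[P]_w ((ytilde Q w - yhat w) ^+ 2)%:E)%E.

Definition block_err (Q : forall i, quantizer R (K i) #|S i|) (i : 'I_m)
    (c : #|S i|.-tuple R) (w : T) : \bar R :=
  ((dot (tsub c (xb i w)) (blk (S i) beta) +
    \sum_(i' < m | i' != i)
       dot (tsub (quantize (Q i') (xb i' w)) (xb i' w)) (blk (S i') beta)) ^+ 2)%:E.

Definition block_objective (i : 'I_m)
    (mu : {measure set (#|S i|.-tuple R) -> \bar R})
    (p : #|S i|.-tuple R -> R)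
    (f : #|S i|.-tuple R -> #|S i|.-tuple R -> \bar R)
    (q : quantizer R (K i) #|S i|) : \bar R :=
  (\sum_(k < K i) \int[mu]_(u in qD q k) (f (qc q k) u * (p u)%:E))%E.
End Prob.

(* Main.v *)
Require Import Defs.
From HB Require Import structures.
From mathcomp Require Import all_boot all_order all_algebra.
From mathcomp Require Import all_classical all_reals all_analysis.
From mathcomp Require Import measurable_realfun.
Import Order.TTheory GRing.Theory Num.Theory.
Import numFieldNormedType.Exports.
Local Open Scope classical_set_scope.
Local Open Scope ring_scope.

Set Implicit Arguments. Unset Strict Implicit. Unset Printing Implicit Defensive.

Section dens.
Local Open Scope ereal_scope.
Context d (U : measurableType d) (R : realType).
Variables (mu nu : {measure set U -> \bar R}) (p : U -> R).
Hypothesis mp : measurable_fun setT p.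
Hypothesis p0 : forall u, (0 <= p u)%R.
Hypothesis nup : forall A, measurable A -> nu A = \int[mu]_(u in A) (p u)%:E.
Import HBNNSimple.

Lemma density_integral f E : (forall x, 0 <= f x) ->
    measurable E -> measurable_fun E f ->
  \int[mu]_(x in E) (f x * (p x)%:E) = \int[nu]_(x in E) f x.
Proof.
move=> f0 mE mf; set g := fun x => (p x)%:E.
have mg : measurable_fun setT g by exact/measurable_EFinP.
have g0 x : 0 <= g x by rewrite lee_fin.
pose h := nnsfun_approx mE mf.
have -> : \int[nu]_(x in E) f x =
    lim (\int[nu]_(x in E) (EFin \o h n) x @[n --> \oo]).
  have fE x : E x -> f x = lim ((EFin \o h n) x @[n --> \oo]).
    by move=> Ex; apply/esym/cvg_lim => //; exact: cvg_nnsfun_approx.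
  under eq_integral => x /[!inE] /fE -> //.
  apply: monotone_convergence => //.
  - move=> n; apply/measurable_EFinP.
    by apply: (measurable_funS measurableT) => //; exact/measurable_funP.
  - by move=> n x Ex //=; rewrite lee_fin.
  - by move=> x Ex a b ab; rewrite lee_fin; exact/lefP/nd_nnsfun_approx.
have -> : \int[mu]_(x in E) (f x * g x) =
    lim (\int[mu]_(x in E) ((EFin \o h n) \* g) x @[n --> \oo]).
  have fg x : E x -> f x * g x = lim (((EFin \o h n) \* g) x @[n --> \oo]).
    by move=> Ex; apply/esym/cvg_lim => //; apply: cvgeZr;
      [by []|exact: cvg_nnsfun_approx].
  under eq_integral => x /[!inE] /fg -> //.
  apply: monotone_convergence => [//| | |].
  - move=> n; apply/emeasurable_funM; apply/measurable_funTS.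
      exact/measurable_EFinP.
    exact: mg.
  - by move=> n x Ex /=; rewrite mule_ge0 ?lee_fin.
  - by move=> x Ex a b ab/=; rewrite lee_wpmul2r ?lee_fin//; exact/lefP/nd_nnsfun_approx.
suff suf n : \int[mu]_(x in E) ((EFin \o h n) x * g x) =
    \int[nu]_(x in E) (EFin \o h n) x.
  by under eq_fun do rewrite suf.
transitivity (\int[nu]_(x in E)
   (\sum_(y \in range (h n)) (y * \1_(h n @^-1` [set y]) x)%:E)); last first.
  by apply: eq_integral => t tE; rewrite /= fimfunE -fsumEFin.
have indich m r : measurable_fun E (fun x => (r * \1_(h m @^-1` [set r]) x)%:E).
  by apply: (measurable_comp measurableT) => //; exact: measurable_funM.
rewrite ge0_integral_fsum//; last by move=> m y Ey; exact: nnfun_muleindic_ge0.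
transitivity (\int[mu]_(x in E) (\sum_(y \in range (h n))
    (y * \1_(h n @^-1` [set y]) x)%:E * g x)).
  under [RHS]eq_integral => x xE.
    rewrite -ge0_mule_fsuml => [|y]; last exact: nnfun_muleindic_ge0.
    rewrite fsumEFin // -(fimfunE _ x); over.
  by [].
rewrite ge0_integral_fsum//; last 2 first.
  - move=> y; apply: emeasurable_funM => //; apply: measurable_funTS.
    exact: mg.
  - by move=> m y Ey; rewrite mule_ge0 ?nnfun_muleindic_ge0.
apply: eq_fsbigr => r rhn.
under [RHS]eq_integral do rewrite EFinM.
rewrite integralZl_indic_nnsfun => //.
under eq_integral do rewrite EFinM -muleA.
rewrite ge0_integralZl//.
- under eq_integral do rewrite muleC.
  rewrite (eq_integral (g \_ (h n @^-1` [set r]))); last first.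
    by move=> x xE; rewrite epatch_indic.
  rewrite -integral_mkcondr -nup//.
  by rewrite integral_indic// setIC.
- apply: emeasurable_funM; first exact/measurable_EFinP.
  exact/measurable_funTS/mg.
- by move=> x _; rewrite mule_ge0 ?lee_fin.
- by move: rhn; rewrite inE => -[t _ <-]; rewrite lee_fin.
Qed.
End dens.

Section dens2.
Local Open Scope ereal_scope.
Context d1 d2 (X : measurableType d1) (U : measurableType d2) (R : realType).
Variables (phi : X -> U) (mphi : measurable_fun setT phi).
Variables (P : {measure set X -> \bar R}) (mu : {measure set U -> \bar R}) (p : U -> R).
Hypothesis mp : measurable_fun setT p.
Hypothesis p0 : forall u, (0 <= p u)%R.
Hypothesis Pp : forall A, measurable A -> P (phi @^-1` A) = \int[mu]_(u in A) (p u)%:E.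

Lemma density_pushforward g E : (forall x, 0 <= g x) ->
    measurable E -> measurable_fun E g ->
  \int[mu]_(x in E) (g x * (p x)%:E) = \int[P]_(w in phi @^-1` E) g (phi w).
Proof.
move=> g0 mE mg.
rewrite (@density_integral _ _ _ mu (pushforward P phi) p mp p0) //.
by rewrite ge0_integral_pushforward.
Qed.
End dens2.

Definition upd (m : nat) (F : 'I_m -> Type) (G : forall j, F j) (i : 'I_m) (g : F i) :
  forall j, F j :=
  fun j => match i =P j with ReflectT e => eq_rect i F g j e | ReflectF _ => G j end.

Lemma upd_same (m : nat) (F : 'I_m -> Type) (G : forall j, F j) (i : 'I_m) (g : F i) :
  upd G g i = g.
Proof. by rewrite /upd; case: eqP => // e; rewrite (eq_irrelevance e erefl). Qed.

Lemma upd_other (m : nat) (F : 'I_m -> Type) (G : forall j, F j) (i j : 'I_m) (g : F i) :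
  i != j -> upd G g j = G j.
Proof. by rewrite /upd; case: eqP. Qed.

Lemma upd_self (m : nat) (F : 'I_m -> Type) (G : forall j, F j) (i j : 'I_m) :
  upd G (G i) j = G j.
Proof. by rewrite /upd; case: eqP => // e; case: j / e. Qed.

Section alg.
Variable R : realType.

Lemma quantize_on (K n : nat) (q : quantizer R K n) k u :
  valid_quantizer q -> qD q k u -> quantize q u = qc q k.
Proof.
move=> [_ [dis _]] Dku; apply: eq_from_tnth => j; rewrite tnth_mktuple.
rewrite (bigD1 k) //= big1 ?addr0; first by rewrite indicE mem_set // mul1r.
move=> l lk; rewrite indicE memNset ?mul0r //.
move=> Dlu; have := dis _ _ lk; rewrite -[X in _ = X -> _]/(@set0 _) => /seteqP[+ _].
by move=> /(_ u (conj Dlu Dku)).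
Qed.

Lemma dot_tsub n (a b c : n.-tuple R) : dot (tsub a b) c = dot a c - dot b c.
Proof.
rewrite /dot -sumrB; apply: eq_bigr => j _; rewrite tnth_mktuple; by rewrite mulrBl.
Qed.

Lemma dot_blk d (A : {set 'I_d}) (v w : d.-tuple R) :
  dot (blk A v) (blk A w) = \sum_(r in A) tnth v r * tnth w r.
Proof.
rewrite big_enum_val /=; apply: eq_bigr => j _; by rewrite /blk !tnth_mktuple.
Qed.
End alg.

Section main.
Context {dT : measure_display} {T : measurableType dT} {R : realType}.
Variables (d m : nat) (x : T -> d.-tuple R) (beta : d.-tuple R)
  (S : 'I_m -> {set 'I_d}) (K : 'I_m -> nat).
Hypothesis Sdisj : forall i j, i != j -> S i :&: S j = finset.set0.

Lemma ytilde_decomp (Q : forall i, quantizer R (K i) #|S i|) w :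
  ytilde x beta Q w - yhat x beta w =
  \sum_(j < m) dot (tsub (quantize (Q j) (xb x S j w)) (xb x S j w)) (blk (S j) beta).
Proof.
under eq_bigr do rewrite dot_tsub.
rewrite sumrB /ytilde /yhat.
have -> : dot (x w) beta = \sum_(j<m) dot (xb x S j w) (blk (S j) beta) +
   \sum_(r < d | [forall i : 'I_m, r \notin S i]) tnth (x w) r * tnth beta r.
  rewrite {1}/dot (bigID (fun r => r \in (\bigcup_(j<m) S j)%SET)) /=.
  congr (_ + _).
  - rewrite partition_disjoint_bigcup.
      by apply: eq_bigr => j _; rewrite /xb dot_blk.
    by move=> i j ij; rewrite -setI_eq0 Sdisj.
  - apply: eq_bigl => r; apply/negP/forallP => [H j|H].
      by apply/negP => rj; apply: H; apply/bigcupP; exists j.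
    by case/bigcupP => j _ rj; move: (H j); rewrite rj.
by rewrite opprD addrACA subrr addr0.
Qed.
End main.

Section main2.
Context {dT : measure_display} {T : measurableType dT} {R : realType}.
Variables (d m : nat) (x : T -> d.-tuple R) (beta : d.-tuple R)
  (S : 'I_m -> {set 'I_d}) (K : 'I_m -> nat).
Hypothesis Sdisj : forall i j, i != j -> S i :&: S j = finset.set0.
Hypothesis mx : measurable_fun setT x.

Lemma mtn r : measurable_fun setT (fun w => tnth (x w) r).
Proof. exact: measurableT_comp (measurable_tnth r) mx. Qed.

Lemma mxb j : measurable_fun setT (xb x S j).
Proof.
apply/measurable_fun_tnthP => t.
have -> : (@tnth _ _ ^~ t \o xb x S j) = (fun w => tnth (x w) (enum_val t)).
  by apply/funext => w /=; rewrite /xb /blk tnth_mktuple.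
exact: mtn.
Qed.

Lemma mquant j K' (q : quantizer R K' #|S j|) t : (forall k, measurable (qD q k)) ->
  measurable_fun setT (fun w => tnth (quantize q (xb x S j w)) t).
Proof.
move=> mD.
have -> : (fun w => tnth (quantize q (xb x S j w)) t) =
   (fun w => \sum_(k < K') \1_(qD q k) (xb x S j w) * tnth (qc q k) t).
  by apply/funext => w; rewrite tnth_mktuple.
apply: measurable_sum => k; apply: measurable_funM => //.
have -> : (fun w => \1_(qD q k) (xb x S j w)) = \1_(xb x S j @^-1` qD q k) :> (T -> R).
  by apply/funext => w; rewrite !indicE.
apply: measurable_indic; rewrite -[X in measurable X]setTI; apply: (@mxb j) => //; exact: mD.
Qed.

Lemma mG (Q : forall i, quantizer R (K i) #|S i|) :
  (forall j k, measurable (qD (Q j) k)) ->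
  measurable_fun setT (fun w => ((ytilde x beta Q w - yhat x beta w) ^+ 2)%:E).
Proof.
move=> mD; apply/measurable_EFinP; apply: measurable_funX.
have -> : (fun w => ytilde x beta Q w - yhat x beta w) = (fun w =>
  \sum_(j < m) dot (tsub (quantize (Q j) (xb x S j w)) (xb x S j w)) (blk (S j) beta)).
  by apply/funext => w; rewrite ytilde_decomp.
apply: measurable_sum => j; rewrite /dot; apply: measurable_sum => t.
apply: measurable_funM => //.
have -> : (fun w => tnth (tsub (quantize (Q j) (xb x S j w)) (xb x S j w)) t) =
  (fun w => tnth (quantize (Q j) (xb x S j w)) t - tnth (xb x S j w) t).
  by apply/funext => w; rewrite tnth_mktuple.
apply: measurable_funB; first exact: mquant.
exact: measurableT_comp (measurable_tnth t) (@mxb j).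
Qed.
End main2.


Section main3.
Context {dT : measure_display} {T : measurableType dT} {R : realType}.
Variables (d m : nat) (x : T -> d.-tuple R) (beta : d.-tuple R)
  (S : 'I_m -> {set 'I_d}) (K : 'I_m -> nat).
Hypothesis Sdisj : forall i j, i != j -> S i :&: S j = finset.set0.
Hypothesis mx : measurable_fun setT x.
Variables (P : probability T R) (i : 'I_m)
  (mu : {measure set (#|S i|.-tuple R) -> \bar R}) (p : #|S i|.-tuple R -> R)
  (Q : forall i : 'I_m, quantizer R (K i) #|S i|)
  (f : #|S i|.-tuple R -> #|S i|.-tuple R -> \bar R).
Hypothesis mp : measurable_fun setT p.
Hypothesis p0 : forall u, 0 <= p u.
Hypothesis dens : forall (A : set (#|S i|.-tuple R)), measurable A ->
     P (xb x S i @^-1` A) = (\int[mu]_(u in A) (p u)%:E)%E.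
Hypothesis vQ : forall i, valid_quantizer (Q i).
Hypothesis condf : forall c, is_cond_exp P (xb x S i) (block_err x beta Q (i:=i) c) (f c).

Lemma key (q : quantizer R (K i) #|S i|) : valid_quantizer q ->
  block_objective mu p f q = joint_risk P x beta (upd Q q).
Proof.
move=> vq; have [mDq [disq covq]] := vq.
rewrite /block_objective /joint_risk.
pose G w := ((ytilde x beta (upd Q q) w - yhat x beta w) ^+ 2)%:E.
have mGq : measurable_fun setT G.
  apply: (mG beta Sdisj mx) => j k; rewrite /upd; case: eqP => [e|_].
    by case: j / e in k *; exact: mDq.
  by case: (vQ j).
have mxbi : measurable_fun setT (xb x S i) by exact: mxb.
transitivity (\sum_(k < K i) \int[P]_(w in xb x S i @^-1` qD q k) G w)%E.
  apply: eq_bigr => k _.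
  have [mf [f0 ce]] := condf (qc q k).
  rewrite (density_pushforward mxbi mp p0 dens f0 (mDq k) (measurable_funTS mf)).
  rewrite -ce; last exact: mDq.
  apply: eq_integral => w /[!inE] Dw.
  rewrite /G /block_err (ytilde_decomp x beta Sdisj) [in RHS](bigD1 i) //= upd_same (quantize_on vq Dw).
  congr (((_ + _) ^+ 2)%:E); apply: eq_bigr => j ji; by rewrite upd_other // eq_sym.
rewrite integral_mkcond; under eq_bigr do rewrite integral_mkcond.
rewrite -ge0_integral_sum //.
- apply: eq_integral => w _.
  have [k0 Dk0] := covq (xb x S i w).
  rewrite (bigD1 k0) //= big1 ?adde0; first by rewrite !patchE !mem_set.
  move=> l lk0; rewrite patchE memNset //= => Dl.
  have := disq _ _ lk0; rewrite -[X in _ = X -> _]/(@set0 _) => /seteqP[+ _].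
  by move=> /(_ _ (conj Dl Dk0)).
- move=> k; apply/(measurable_restrictT _ _).1 => //.
    rewrite -[X in measurable X]setTI; apply: mxbi => //; exact: mDq.
  exact: measurable_funTS mGq.
- by move=> k w _; rewrite patchE; case: ifP => _ //=; rewrite lee_fin sqr_ge0.
Qed.
End main3.

Unset Implicit Arguments.
Theorem lemma1 (R : realType) (dT : measure_display) (T : measurableType dT)
  (P : probability T R) (d m : nat)
  (x : T -> d.-tuple R) (beta : d.-tuple R)
  (S : 'I_m -> {set 'I_d}) (K : 'I_m -> nat)
  (mu : forall i : 'I_m, {measure set (#|S i|.-tuple R) -> \bar R})
  (p : forall i : 'I_m, #|S i|.-tuple R -> R)
  (Q : forall i : 'I_m, quantizer R (K i) #|S i|) :
  measurable_fun [set: T] x ->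
  (forall i, S i != finset.set0) ->
  (forall i j, i != j -> S i :&: S j = finset.set0) ->
  (forall i, is_lebesgue_tuple (mu i)) ->
  (forall i, measurable_fun [set: #|S i|.-tuple R] (p i)) ->
  (forall i u, 0 <= p i u) ->
  (forall i (A : set (#|S i|.-tuple R)), measurable A ->
     P (xb x S i @^-1` A) = (\int[mu i]_(u in A) (p i u)%:E)%E) ->
  (* Q_1, ..., Q_m are optimal quantizers for min E[(ytilde - yhat)^2] *)
  (forall i, valid_quantizer (Q i)) ->
  (forall Q' : forall i : 'I_m, quantizer R (K i) #|S i|,
     (forall i, valid_quantizer (Q' i)) ->
     (joint_risk P x beta Q <= joint_risk P x beta Q')%E) ->
  forall i : 'I_m,
  forall f : #|S i|.-tuple R -> #|S i|.-tuple R -> \bar R,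
  (* f(c, .) is a version of E[ block_err | x^(i) = . ] *)
  (forall c, is_cond_exp P (xb x S i) (block_err x beta Q (i:=i) c) (f c)) ->
  exists qbar : quantizer R (K i) #|S i|,
    [/\ valid_quantizer qbar,
        quantize qbar =1 quantize (Q i) &
        forall q : quantizer R (K i) #|S i|, valid_quantizer q ->
          (block_objective (mu i) (p i) f qbar <= block_objective (mu i) (p i) f q)%E].
Proof.
move=> mx S0 Sdisj leb mp p0 dens vQ opt i f condf.
have kk := key Sdisj mx (mp i) (p0 i) (dens i) vQ condf.
exists (Q i); split => // q vq.
rewrite !kk //.
have -> : joint_risk P x beta (upd Q (Q i)) = joint_risk P x beta Q.
  rewrite /joint_risk; apply: eq_integral => w _; rewrite /ytilde.
  congr (((_ + _ - _) ^+ 2)%:E); apply: eq_bigr => j _; by rewrite upd_self.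
apply: opt => j; rewrite /upd; case: eqP => [e|_]; last exact: vQ.
by case: j / e.
Qed.
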